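(* For any finite abstract simplicial complex $G$, $\sum_{x\in G}\omega(x)\chi(S(x))=0$.
   Context: A finite abstract simplicial complex $G$ is a finite set of non-empty finite sets closed under taking non-empty subsets; $\omega(x)=(-1)^{|x|-1}$. The graph $G_1$ has vertex set $G$, with $x\neq y$ adjacent iff $x\subset y$ or $y\subset x$. $S(x)=\{y\in G: y\subsetneq x\text{ or }x\subsetneq y\}$, and $\chi(S(x))$ is the Euler characteristic $\sum_K(-1)^{|K|-1}$ over non-empty cliques $K$ of the subgraph of $G_1$ induced on $S(x)$. *)

(* Defs.v *)
From mathcomp Require Import all_boot all_order all_algebra.
Set Implicit Arguments. Unset Strict Implicit. Unset Printing Implicit Defensive.
Import GRing.Theory Num.Theory.
Local Open Scope ring_scope.

Definition is_complex (T : finType) (G : {set {set T}}) : Prop :=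
  set0 \notin G /\
  forall x y : {set T}, x \in G -> y \subset x -> y != set0 -> y \in G.

Definition omega (T : finType) (x : {set T}) : int := (-1) ^+ (#|x|.-1).

(* adjacency in G_1 : distinct and comparable by inclusion *)
Definition adj1 (T : finType) (x y : {set T}) : bool :=
  (x != y) && ((x \subset y) || (y \subset x)).

(* the unit sphere S(x) in G_1 *)
Definition Sph (T : finType) (G : {set {set T}}) (x : {set T}) : {set {set T}} :=
  [set y in G | (y \proper x) || (x \proper y)].

Definition is_clique (T : finType) (A K : {set {set T}}) : bool :=
  (K \subset A) && [forall a in K, forall b in K, (a != b) ==> adj1 a b].

(* Euler characteristic of the subgraph of G_1 induced on A:
   sum over non-empty cliques K of (-1)^(|K|-1) *)
Definition chi (T : finType) (A : {set {set T}}) : int :=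
  \sum_(K : {set {set T}} | (K != set0) && is_clique A K) (-1) ^+ (#|K|.-1).

(* Main.v *)
Require Import Defs.
From mathcomp Require Import all_boot all_order all_algebra.
Set Implicit Arguments. Unset Strict Implicit. Unset Printing Implicit Defensive.
Import GRing.Theory Num.Theory.
Local Open Scope ring_scope.

Definition sgn (X : finType) (K : {set X}) : int := (-1) ^+ #|K|.

Lemma sgnU1 (X : finType) (x : X) (L : {set X}) : x \notin L -> sgn (x |: L) = - sgn L.
Proof. by move=> xL; rewrite /sgn cardsU1 xL exprS mulN1r. Qed.

Section Gen.
Variable X : finType.
Variable le : rel X.

Definition chainb (K : {set X}) := [forall a in K, forall b in K, le a b || le b a].
Definition upset (G : {set X}) x := [set y in G | le x y && (y != x)].
Definition FF (A : {set X}) : int := \sum_(K : {set X} | (K \subset A) && chainb K) sgn K.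
Definition minb x (K : {set X}) := (x \in K) && [forall y in K, le x y].

Lemma FF_split A :
  FF A = 1 + \sum_(K : {set X} | (K != set0) && (K \subset A) && chainb K) sgn K.
Proof.
rewrite /FF (bigD1 set0) /=; last first.
  by rewrite sub0set; apply/forall_inP => a; rewrite inE.
rewrite /sgn cards0 expr0; congr (_ + _); apply: eq_bigl => K.
by rewrite andbC andbA.
Qed.

Lemma chain_sub (K' K : {set X}) : K' \subset K -> chainb K -> chainb K'.
Proof.
move=> sK /forall_inP cK; apply/forall_inP => a aK; apply/forall_inP => b bK.
exact: (forall_inP (cK a (subsetP sK a aK))) b (subsetP sK b bK).
Qed.

Hypothesis le_refl : forall a, le a a.
Hypothesis le_anti : forall a b, le a b -> le b a -> a = b.
Hypothesis has_min : forall K, K != set0 -> chainb K -> exists x, minb x K.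

Lemma sum_min (G : {set X}) : \sum_(x in G) FF (upset G x) =
   - \sum_(K : {set X} | (K != set0) && (K \subset G) && chainb K) sgn K.
Proof.
rewrite -sumrN; symmetry.
rewrite (eq_bigr (fun K => \sum_(x | (x \in G) && minb x K) - sgn K)); last first.
  move=> K /andP[/andP[K0 KG] cK].
  have [x0 mx0] := has_min K0 cK.
  rewrite (big_pred1 x0) // => x.
  apply/idP/eqP.
    case/andP => _ mx; apply: le_anti.
      by move: mx => /andP[_ /forall_inP]; apply; case/andP: mx0.
    by move: mx0 => /andP[_ /forall_inP]; apply; case/andP: mx.
  move->; rewrite mx0 andbT; apply: (subsetP KG); by case/andP: mx0.
rewrite (exchange_big_dep (fun x => x \in G)) /=; last by move=> K x _ /andP[].
apply: eq_bigr => x xG.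
rewrite /FF.
rewrite (reindex_onto (fun L => x |: L) (fun K => K :\ x)) /=; last first.
  by move=> K /andP[_ /andP[_ /andP[xK _]]]; rewrite setD1K.
apply: eq_big.
  move=> L; apply/idP/idP.
    case/andP => [/andP[/andP[/andP[_ sG] cK] /andP[_ /andP[_ mx]]] /eqP eL].
    have xL : x \notin L by rewrite -eL setD11.
    apply/andP; split.
      apply/subsetP => y yL; rewrite inE.
      rewrite (subsetP sG y (setU1r x yL)) (forall_inP mx y (setU1r x yL)) /=.
      by apply: contraNneq xL => eyx; rewrite -eyx.
    apply/forall_inP => a aL; apply/forall_inP => b bL.
    exact: (forall_inP (forall_inP cK a (setU1r _ aL))) b (setU1r _ bL).
  case/andP => sL cL.
  have xL : x \notin L.
    by apply/negP => xL; move: (subsetP sL x xL); rewrite inE eqxx /= !andbF.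
  rewrite setU1K // eqxx andbT xG /= /minb setU11 /=.
  have upL : forall y, y \in L -> (y \in G) && (le x y && (y != x)).
    by move=> y yL; move: (subsetP sL y yL); rewrite inE.
  rewrite -!andbA; apply/and4P; split.
  - by apply/set0Pn; exists x; exact: setU11.
  - apply/subsetP => y; rewrite in_setU1 => /predU1P [->|yL] //.
    by case/andP: (upL y yL).
  - apply/forall_inP => a; rewrite in_setU1 => /predU1P [->|aL];
      apply/forall_inP => b; rewrite in_setU1 => /predU1P [->|bL].
    + by rewrite le_refl.
    + by case/and3P: (upL b bL) => _ ->.
    + by case/and3P: (upL a aL) => _ ->; rewrite orbT.
    + exact: (forall_inP (forall_inP cL a aL)) b bL.
  - apply/forall_inP => y; rewrite in_setU1 => /predU1P [->|yL].
      exact: le_refl.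
    by case/and3P: (upL y yL).
move=> L /andP[_ /eqP eL].
have xL : x \notin L by rewrite -eL setD11.
by rewrite sgnU1 // opprK.
Qed.

End Gen.

Section SetT.
Variable T : finType.

Definition le1 : rel {set T} := fun a b => a \subset b.
Definition le2 : rel {set T} := fun a b => b \subset a.

Lemma chain12 (K : {set {set T}}) : chainb le2 K = chainb le1 K.
Proof.
apply/idP/idP => /forall_inP H; apply/forall_inP => a aK;
  apply/forall_inP => b bK; rewrite orbC; exact: (forall_inP (H a aK)) b bK.
Qed.

Lemma FF12 (A : {set {set T}}) : FF le2 A = FF le1 A.
Proof. by apply: eq_bigl => K; rewrite chain12. Qed.

Lemma le1_refl : forall a, le1 a a. Proof. exact: subxx. Qed.
Lemma le2_refl : forall a, le2 a a. Proof. exact: subxx. Qed.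
Lemma le1_anti : forall a b, le1 a b -> le1 b a -> a = b.
Proof. by rewrite /le1 /le2 => a b ab ba; apply/eqP; rewrite eqEsubset ab ba. Qed.
Lemma le2_anti : forall a b, le2 a b -> le2 b a -> a = b.
Proof. by rewrite /le1 /le2 => a b ab ba; apply/eqP; rewrite eqEsubset ab ba. Qed.

Lemma has_min1 K : K != set0 -> chainb le1 K -> exists x, minb le1 x K.
Proof.
case/set0Pn => a0 a0K cK.
case: (arg_minnP (fun a : {set T} => #|a|) a0K) => m mK mmin.
exists m; apply/andP; split; first exact: mK. apply/forall_inP => y yK.
case/orP: (forall_inP (forall_inP cK m mK) y yK) => // ym.
have : y == m by rewrite eqEcard; apply/andP; split; [exact: ym | exact: mmin].
by move/eqP->; exact: subxx.
Qed.

Lemma has_min2 K : K != set0 -> chainb le2 K -> exists x, minb le2 x K.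
Proof.
case/set0Pn => a0 a0K cK.
case: (arg_maxnP (fun a : {set T} => #|a|) a0K) => m mK mmax.
exists m; apply/andP; split; first exact: mK. apply/forall_inP => y yK.
case/orP: (forall_inP (forall_inP cK m mK) y yK) => // ym.
have : m == y by rewrite eqEcard; apply/andP; split; [exact: ym | exact: mmax].
by move/eqP->; exact: subxx.
Qed.

Lemma binom (x : {set T}) : x != set0 -> \sum_(y : {set T} | y \subset x) sgn y = 0.
Proof.
case/set0Pn => v vx.
rewrite (bigID (fun y : {set T} => v \in y)) /=.
rewrite (reindex_onto (fun z => v |: z) (fun y => y :\ v)) /=; last first.
  by move=> y /andP[_ vy]; rewrite setD1K.
have -> : \sum_(j | (v |: j \subset x) && (v \in v |: j) && ((v |: j) :\ v == j))
     sgn (v |: j) = \sum_(z : {set T} | (z \subset x) && (v \notin z)) - sgn z.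
  2: by rewrite sumrN addNr.
apply: eq_big.
  move=> z; apply/idP/idP.
    case/andP => [/andP[sx _] /eqP e].
    have vz : v \notin z by rewrite -e setD11.
    by rewrite vz andbT (subset_trans (subsetUr _ _) sx).
  case/andP => zx vz.
  by rewrite setU1K // eqxx andbT setU11 andbT subUset sub1set vx zx.
move=> z /andP[_ /eqP e].
have vz : v \notin z by rewrite -e setD11.
by rewrite sgnU1.
Qed.


Definition Dn (x : {set T}) := [set y : {set T} | (y \subset x) && (y != x) && (y != set0)].

Lemma signm1 n : (0 < n)%N -> (-1)^+n.-1 = - (-1)^+n :> int.
Proof. by case: n => // n _; rewrite exprS mulN1r opprK. Qed.

Lemma Dn_up x y : y \in Dn x -> upset le2 (Dn x) y = Dn y.
Proof.
rewrite !inE => /andP[/andP[yx yNx] y0]; apply/setP => z; rewrite !inE /le2.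
case zy: (z \subset y); rewrite /= ?andbF //.
rewrite (subset_trans zy yx) /=.
have zx : z != x.
  by apply: contraNneq yNx => ezx; rewrite eqEsubset yx -ezx zy.
by rewrite zx /= andbC.
Qed.

Lemma sphere n : forall x : {set T}, (#|x| <= n)%N -> x != set0 ->
  FF le1 (Dn x) = (-1)^+(#|x|.-1).
Proof.
elim: n => [|n IH] x.
  by rewrite leqn0 cards_eq0 => /eqP ->; rewrite eqxx.
move=> hx x0.
rewrite FF_split.
have := sum_min le2_refl le2_anti (@has_min2) (Dn x).
rewrite (eq_bigl (fun K => (K != set0) && (K \subset Dn x) && chainb le1 K));
  last by move=> K; rewrite chain12.
move=> H.
rewrite -[X in 1 + X = _]opprK -H.
rewrite (eq_bigr (fun y => - sgn y)); last first.
  move=> y yD.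
  have := yD; rewrite inE => /andP[/andP[yx yNx] y0].
  have hy : (#|y| <= n)%N.
    have : (#|y| < #|x|)%N by apply: proper_card; rewrite properEneq yNx yx.
    by move=> h; rewrite -ltnS; apply: leq_trans hx.
  by rewrite Dn_up // FF12 IH // signm1 // card_gt0.
rewrite sumrN opprK.
have B := binom x0.
rewrite (bigD1 x) //= (bigD1 set0) /= in B; last by rewrite sub0set eq_sym x0.
rewrite (eq_bigl (fun i : {set T} => (i \subset x) && (i != x) && (i != set0))); last first.
  by move=> i; rewrite inE.
rewrite signm1 ?card_gt0 //.
move: B; rewrite /sgn cards0 expr0 => B; apply: (addrI ((-1) ^+ #|x|)); rewrite addrN; exact: B.
Qed.

Lemma FF_join (D U : {set {set T}}) :
  (forall d u, d \in D -> u \in U -> (d \subset u) && (d != u)) ->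
  FF le1 (D :|: U) = FF le1 D * FF le1 U.
Proof.
move=> DU.
have DnU : forall z, z \in D -> z \in U -> False.
  by move=> z zD zU; move: (DU z z zD zU); rewrite eqxx andbF.
rewrite /FF big_distrlr /= pair_big_dep /=.
rewrite (reindex_onto (fun p : {set {set T}} * {set {set T}} => p.1 :|: p.2)
                      (fun K => (K :&: D, K :&: U))) /=; last first.
  by move=> K /andP[sK _]; rewrite -setIUr; apply/setIidPl.
apply: eq_big => [[K1 K2]|[K1 K2]] /=.
  apply/idP/idP.
    case/andP => [/andP[_ cK] /eqP [e1 e2]].
    have s1 : K1 \subset D by rewrite -e1 subsetIr.
    have s2 : K2 \subset U by rewrite -e2 subsetIr.
    by rewrite s1 s2 /= (chain_sub (subsetUl K1 K2) cK) (chain_sub (subsetUr K1 K2) cK).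
  case/andP => [/andP[s1 c1] /andP[s2 c2]].
  rewrite setUSS //=.
  have e1 : (K1 :|: K2) :&: D = K1.
    apply/setP => z; rewrite !inE.
    case z1: (z \in K1); case z2: (z \in K2) => //=.
    - exact: (subsetP s1).
    - exact: (subsetP s1).
    - by apply/negP => zD; apply: DnU zD (subsetP s2 _ z2).
  have e2 : (K1 :|: K2) :&: U = K2.
    apply/setP => z; rewrite !inE.
    case z1: (z \in K1); case z2: (z \in K2) => //=.
    - exact: (subsetP s2).
    - by apply/negP => zU; apply: DnU (subsetP s1 _ z1) zU.
    - exact: (subsetP s2).
  rewrite e1 e2 eqxx andbT.
  apply/forall_inP => a; rewrite inE => /orP[aK|aK];
    apply/forall_inP => b; rewrite inE => /orP[bK|bK].
  - exact: (forall_inP (forall_inP c1 a aK)) b bK.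
  - by case/andP: (DU a b (subsetP s1 a aK) (subsetP s2 b bK)) => h _; rewrite /le1 h.
  - by case/andP: (DU b a (subsetP s1 b bK) (subsetP s2 a aK)) => h _; rewrite /le1 h orbT.
  - exact: (forall_inP (forall_inP c2 a aK)) b bK.
move=> /andP[_ /eqP [e1 e2]].
have I0 : K1 :&: K2 = set0.
  apply/setP => z; rewrite !inE; apply/negP => /andP[z1 z2].
  have : z \in (K1 :|: K2) :&: D by rewrite e1.
  have : z \in (K1 :|: K2) :&: U by rewrite e2.
  rewrite !inE => /andP[_ zU] /andP[_ zD].
  exact: DnU zD zU.
by rewrite /sgn cardsU I0 cards0 subn0 exprD.
Qed.

Lemma chi_FF (A : {set {set T}}) : chi A = 1 - FF le1 A.
Proof.
rewrite /chi FF_split opprD addrA subrr add0r -sumrN.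
apply: eq_big.
  move=> K; rewrite -andbA; congr (_ && _); rewrite /is_clique; congr (_ && _).
  apply: eq_forallb => a; congr (_ ==> _); apply: eq_forallb => b.
  case: (b \in K) => //=; case: (eqVneq a b) => [->|ab]; rewrite /= /Defs.adj1 /le1 ?eqxx ?subxx ?ab //=.
by move=> K /andP[K0 _]; rewrite /sgn signm1 // card_gt0.
Qed.

End SetT.

Theorem mainTheorem12 (T : finType) (G : {set {set T}}) :
  is_complex G ->
  \sum_(x in G) omega x * chi (Sph G x) = 0.
Proof.
move=> [G0 Gc].
have Dx : forall x, x \in G -> upset (@le2 T) G x = Dn x.
  move=> x xG; apply/setP => y; rewrite !inE /le2.
  case yG: (y \in G) => /=.
    have y0 : y != set0 by apply: contraNneq G0 => <-.
    by rewrite y0 andbT.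
  apply/esym; apply/negP => /andP[/andP[yx _] y0].
  by move: (Gc x y xG yx y0); rewrite yG.
have x0 : forall x, x \in G -> x != set0.
  by move=> x xG; apply: contraNneq G0 => <-.
rewrite (eq_bigr (fun x => omega x - FF (@le1 T) (upset (@le1 T) G x))); last first.
  move=> x xG.
  have Sph_eq : Sph G x = upset (@le2 T) G x :|: upset (@le1 T) G x.
    apply/setP => y; rewrite !inE /le1 /le2 !properEneq [x == y]eq_sym.
    by case: (y \in G); case: (y == x); case: (y \subset x); case: (x \subset y).
  rewrite chi_FF Sph_eq FF_join; last first.
    move=> d u; rewrite !inE /le1 /le2 => /andP[_ /andP[dx dNx]] /andP[_ /andP[xu uNx]].
    rewrite (subset_trans dx xu) /=.
    by apply: contraNneq dNx => edu; rewrite eqEsubset dx /= edu xu.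
  rewrite Dx // (sphere (leqnn _) (x0 x xG)) /omega mulrBr mulr1 mulrA -expr2 sqrr_sign mul1r //.
rewrite sumrB.
have E1 := sum_min (@le1_refl T) (@le1_anti T) (@has_min1 T) G.
have E2 := sum_min (@le2_refl T) (@le2_anti T) (@has_min2 T) G.
rewrite (eq_bigr (fun x => FF (@le2 T) (upset (@le2 T) G x))); last first.
  by move=> x xG; rewrite FF12 Dx // (sphere (leqnn _) (x0 x xG)).
rewrite E1 E2.
rewrite (eq_bigl (fun K => (K != set0) && (K \subset G) && chainb (@le1 T) K));
  last by move=> K; rewrite chain12.
by rewrite subrr.
Qed.
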